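(* Let ${\bm p}^t\in(0,1)^V$ be a softmax probability vector, $y\in[V]$ a ground-truth class with one-hot ${\bm y}={\bm e}_y$, $y^*=\arg\max_{j\neq y}p_j^t$, ${\bm g}^t={\bm p}^t-{\bm y}$, and ${\bm H}^t_{{\bm z}}=\mathrm{diag}({\bm p}^t)-{\bm p}^t({\bm p}^t)^\top$. Let $S=p^t_y+p^t_{y^*}$, $\tau=1-S$, $\bar p_y=p^t_y/S\in(0,1)$, and $\Delta_{\mathrm{bin}}(\bar p_y)=4\bar p_y(1-\bar p_y)^2$. Then $$\Delta^t_{y^*,y}:=({\bm H}^t_{{\bm z}}{\bm g}^t)_{y^*}-({\bm H}^t_{{\bm z}}{\bm g}^t)_y=\Delta_{\mathrm{bin}}(\bar p_y)+\zeta^t\quad\text{with}\quad |\zeta^t|\le 6\tau.$$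
   Context: ${\bm H}^t_{{\bm z}}$ and ${\bm g}^t$ are the Hessian and gradient in the logits of the softmax cross-entropy loss $-\sum_k y_k\log p_k$ at ${\bm p}^t$. *)

(* Defs.v *)
From HB Require Import structures.
From mathcomp Require Import all_boot all_order all_algebra.
Set Implicit Arguments. Unset Strict Implicit. Unset Printing Implicit Defensive.
Import Order.TTheory GRing.Theory Num.Theory.
Local Open Scope ring_scope.

Definition onehot (R : ringType) (V : nat) (y : 'I_V) : 'cV[R]_V :=
  \col_(i < V) (if i == y then 1 else 0).

Definition ce_grad (R : ringType) (V : nat) (p : 'cV[R]_V) (y : 'I_V) : 'cV[R]_V :=
  p - onehot R y.

Definition ce_hess (R : ringType) (V : nat) (p : 'cV[R]_V) : 'M[R]_V :=
  diag_mx p^T - p *m p^T.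

Definition Delta_gap (R : ringType) (V : nat) (p : 'cV[R]_V) (y ys : 'I_V) : R :=
  (ce_hess p *m ce_grad p y) ys 0 - (ce_hess p *m ce_grad p y) y 0.

Definition Delta_bin (R : ringType) (q : R) : R := 4 * q * (1 - q) ^+ 2.

(* Main.v *)
Require Import Defs.
From HB Require Import structures.
From mathcomp Require Import all_boot all_order all_algebra.
From mathcomp Require Import ring lra.
Import Order.TTheory GRing.Theory Num.Theory.
Local Open Scope ring_scope.
Lemma Bbound (R : realFieldType) (S q : R) : 0 <= S <= 1 -> 0 <= q <= 1 ->
  `|(S+1)*(1-2*q)*(1+q) + q + (S^+2+S+1)*(q^+2+(1-q)^+2)*(2*q-1)| <= 5.
Proof.
move=> /andP[S0 S1] /andP[q0 q1].
set c2 := (2*q^+2-2*q+1)*(2*q-1).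
set c1 := q*((2*q-1)*(2*q-3)).
set c0 := 4*q*(1-q)^+2.
have -> : (S+1)*(1-2*q)*(1+q) + q + (S^+2+S+1)*(q^+2+(1-q)^+2)*(2*q-1)
   = S^+2 * c2 + S * c1 + c0 by rewrite /c2 /c1 /c0; ring.
have h2 : `|c2| <= 1.
  rewrite /c2 normrM; apply: mulr_ile1 => //; rewrite ler_norml; apply/andP; split; nra.
have h1 : `|c1| <= 3.
  rewrite /c1 normrM (ger0_norm q0) -[3]mul1r; apply: ler_pM => //.
  rewrite normrM -[3]mul1r; apply: ler_pM => //; rewrite ler_norml; apply/andP; split; nra.
have h0 : `|c0| <= 1.
  have hq : 4*q*(1-q) <= 1 by have := sqr_ge0 (2*q-1); nra.
  rewrite /c0 ger0_norm; last by apply: mulr_ge0; nra.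
  rewrite expr2 mulrA; apply: (le_trans (y := 1*(1-q))); last lra.
  apply: ler_wpM2r; lra.
have hS2 : `|S^+2| <= 1 by rewrite ger0_norm ?exprn_ge0 // exprn_ile1.
have hS : `|S| <= 1 by rewrite ger0_norm.
apply: (le_trans (y := 1 + 3 + 1)); last lra.
apply: (le_trans (ler_normD _ _)); apply: lerD => //.
apply: (le_trans (ler_normD _ _)); apply: lerD.
  by rewrite normrM -[1]mul1r; apply: ler_pM.
by rewrite normrM -[3]mul1r; apply: ler_pM.
Qed.

Lemma Hg (R : realFieldType) V (p : 'cV[R]_V) y i :
  (ce_hess p *m ce_grad p y) i 0 =
  p i 0 * ce_grad p y i 0 - p i 0 * \sum_k p k 0 * ce_grad p y k 0.
Proof.
rewrite /ce_hess mulmxBl mul_diag_mx -mulmxA !mxE big_ord1 !mxE.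
congr (_ - _ * _); apply: eq_bigr => k _; rewrite !mxE.
by [].
Qed.

Lemma alg (R : realFieldType) (S q r : R) :
  let a := S*q in let b := S*(1-q) in
  b*b - b*(a^+2+b^+2+r-a) - (a*(a-1) - a*(a^+2+b^+2+r-a)) - 4*q*(1-q)^+2 =
  (S-1)*((S+1)*(1-2*q)*(1+q) + q + (S^+2+S+1)*(q^+2+(1-q)^+2)*(2*q-1)) + r*(a-b).
Proof. rewrite /=; ring. Qed.

Theorem lemma3 (R : realFieldType) (V : nat) (p : 'cV[R]_V) (y ys : 'I_V)
  (hp : forall i, 0 < p i 0 < 1)
  (hsum : \sum_(i < V) p i 0 = 1)
  (hys : ys != y)
  (hmax : forall j, j != y -> p j 0 <= p ys 0) :
  let S := p y 0 + p ys 0 in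
  let tau := 1 - S in
  let pbar := p y 0 / S in
  exists zeta : R,
    Delta_gap p y ys = Delta_bin pbar + zeta /\ `|zeta| <= 6 * tau.
Proof.
move=> S tau pbar.
set a := p y 0 in S tau pbar *; set b := p ys 0 in S tau pbar *.
set r := \sum_(k | (k != y) && (k != ys)) p k 0 ^+ 2.
set t := \sum_(k | (k != y) && (k != ys)) p k 0.
have hQ : \sum_k p k 0 ^+ 2 = a^+2 + b^+2 + r.
  by rewrite (bigD1 y) //= (bigD1 ys) //= addrA.
have h1 : 1 = a + b + t.
  by rewrite -hsum (bigD1 y) //= (bigD1 ys) //= addrA.
have r0 : 0 <= r by apply: sumr_ge0 => k _; apply: sqr_ge0.
have rt : r <= t.
  apply: ler_sum => k _; have /andP[h0 h1'] := hp k; rewrite expr2 ler_piMr //; lra.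
have htau : tau = t by rewrite /tau /S h1; ring.
have ha := hp y; have hb := hp ys; rewrite -/a in ha; rewrite -/b in hb.
have S0 : 0 < S by rewrite /S; lra.
have hc : \sum_k p k 0 * ce_grad p y k 0 = a^+2 + b^+2 + r - a.
  rewrite -hQ.
  under eq_bigr => k _ do rewrite !mxE mulrBr.
  have e : \sum_i p i 0 * (if i == y then 1 else 0) = a.
    rewrite (bigD1 y) //= eqxx mulr1 big1 ?addr0 //.
    by move=> k /negbTE ->; rewrite mulr0.
  rewrite sumrB e; congr (_ - _); apply: eq_bigr => k _; by rewrite expr2.
have gys : ce_grad p y ys 0 = b by rewrite !mxE (negbTE hys) subr0.
have gy : ce_grad p y y 0 = a - 1 by rewrite !mxE eqxx.
have hq : a = S * pbar by rewrite /pbar mulrC divfK // gt_eqF.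
have hq' : b = S * (1 - pbar) by rewrite mulrBr mulr1 -hq /S; ring.
have q0 : 0 <= pbar <= 1.
  rewrite /pbar; apply/andP; split; first by apply: divr_ge0; lra.
  by rewrite ler_pdivrMr // mul1r /S; lra.
exists ((S-1)*((S+1)*(1-2*pbar)*(1+pbar) + pbar + (S^+2+S+1)*(pbar^+2+(1-pbar)^+2)*(2*pbar-1)) + r*(a-b)).
split.
  rewrite /Delta_gap !Hg hc gys gy /Delta_bin.
  have := @alg R S pbar r; rewrite /= -hq -hq' => E.
  rewrite -/a -/b; lra.
have hB := @Bbound R S pbar.
have SS : 0 <= S <= 1 by apply/andP; split; lra.
have {}hB := hB SS q0.
apply: (le_trans (ler_normD _ _)).
apply: (le_trans (y := tau * 5 + tau * 1)); last lra.
apply: lerD; rewrite normrM.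
  apply: ler_pM => //; rewrite ler0_norm /tau; lra.
apply: ler_pM => //; first by rewrite ger0_norm; lra.
rewrite ler_norml; apply/andP; split; lra.
Qed.
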